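(* Let $n\geq 2$ and number the crossings of the $n$-twist loop $1,\dots,n$ in any fixed order. The set of words of the states of the $n$-twist loop consisting of exactly two closed curves is \[ \mathcal{T}_n=\left\{1^k01^{n-k-1}\;\middle|\; 0\leq k\leq n-1\right\}. \]
   Context: A (shadow) diagram is a finite collection of closed curves in the plane in general position whose only singularities are finitely many transverse double points, called crossings; over/under information is ignored. At a crossing four corners of complementary regions meet, forming two pairs of opposite corners. Splitting a crossing replaces a small neighbourhood of it by two disjoint arcs in one of two ways, each merging one pair of opposite corners into a channel. A state is the result of choosing a split at every crossing; it is a disjoint union of simple closed curves. The $n$-twist loop: take a horizontal row of $n$ crossings formed by two strands twisting around each other (consecutive crossings bound a bigon), and join the two left endpoints to each other by an arc and the two right endpoints to each other by an arc, creating no new crossings. At every crossing, the upper and lower corners belong to the unbounded region. The $A$-split at a crossing is the split merging its upper and lower corners (opening the channel through the unbounded region); the $B$-split merges its left and right corners. With crossings numbered $1,\dots,n$, a state is recorded by the binary word whose $i$-th letter is $0$ if an $A$-split is applied at crossing $i$ and $1$ if a $B$-split is applied. Notation: $\sigma^k$ denotes $k$ consecutive copies of the letter $\sigma$ (empty if $k\leq 0$), words are concatenated. *)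

(* Defs.v *)
From mathcomp Require Import all_boot all_fingroup.
Set Implicit Arguments. Unset Strict Implicit. Unset Printing Implicit Defensive.

(* Crossings are indexed by their geometric position 0..n-1, left to right.
   Each crossing has four arc-ends ("ports"), encoded by 'I_4:
     0 = NW, 1 = NE, 2 = SW, 3 = SE. *)
Definition port (n : nat) := ('I_n * 'I_4)%type.

(* The edges of the diagram (away from crossings), on nat-coded ports:
   the top arc of the bigon joins NE_i to NW_(i+1), the bottom arc joins
   SE_i to SW_(i+1); the left closing arc joins NW_0 to SW_0 and the right
   closing arc joins NE_(n-1) to SE_(n-1). *)
Definition ext_nat (n : nat) (p : nat * nat) : nat * nat :=
  let: (i, c) := p in
  match c with
  | 0 => if i == 0 then (0, 2) else (i.-1, 1)
  | 1 => if i == n.-1 then (i, 3) else (i.+1, 0)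
  | 2 => if i == 0 then (0, 0) else (i.-1, 3)
  | _ => if i == n.-1 then (i, 1) else (i.+1, 2)
  end.

Definition ext_rel (n : nat) : rel (port n) :=
  fun x y => ext_nat n (val x.1, val x.2) == (val y.1, val y.2).

(* Splitting a crossing.  false = A-split (merges upper and lower corners:
   the new arcs join NW-SW and NE-SE); true = B-split (merges left and right
   corners: the new arcs join NW-NE and SW-SE). *)
Definition split_nat (b : bool) (c : nat) : nat :=
  if b then match c with 0 => 1 | 1 => 0 | 2 => 3 | _ => 2 end
  else match c with 0 => 2 | 2 => 0 | 1 => 3 | _ => 1 end.

Definition split_rel (n : nat) (s : 'I_n -> bool) : rel (port n) :=
  fun x y => (x.1 == y.1) && (split_nat (s x.1) (val x.2) == val y.2).

(* The state as a union of two perfect matchings on ports; its closed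
   curves are the connected components of this (symmetric) relation. *)
Definition state_rel (n : nat) (s : 'I_n -> bool) : rel (port n) :=
  fun x y => ext_rel x y || split_rel s x y.

Definition ncurves (n : nat) (s : 'I_n -> bool) : nat :=
  n_comp (state_rel s) predT.

Definition twist_T (n : nat) : {set n.-tuple bool} :=
  [set w : n.-tuple bool |
    [exists k : 'I_n, tval w == nseq k true ++ false :: nseq (n - k.+1) true]].

(* Main.v *)
Require Import Defs.
From mathcomp Require Import all_boot all_fingroup zify.
Set Implicit Arguments. Unset Strict Implicit. Unset Printing Implicit Defensive.


Lemma n_comp_label (T : finType) (e : rel T) m (f : T -> nat) :
  connect_sym e -> (forall x y, connect e x y = (f x == f y)) ->
  (forall x, f x <= m) -> (forall j, j <= m -> exists x, f x = j) ->
  n_comp e predT = m.+1.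
Proof.
move=> sym hc hm hs.
pose g x : 'I_m.+1 := inord (f x).
have gK x : (g x : nat) = f x by rewrite /g inordK // ltnS.
rewrite /n_comp_mem.
have -> : #|predI (roots e) (mem predT)| = #|[set x | roots e x]|.
  by apply: eq_card => x; rewrite !inE andbT.
rewrite -(card_in_imset (f := g)); last first.
  move=> x y; rewrite !inE => /eqP rx /eqP ry /(congr1 (@nat_of_ord _)); rewrite !gK => /eqP.
  by rewrite -hc => /(rootP sym); rewrite rx ry.
rewrite -[RHS]card_ord; apply: eq_card => j; rewrite inE.
case: (hs j (ltn_ord j)) => x fx.
apply/imsetP; exists (root e x); first by rewrite inE; exact: roots_root.
apply: ord_inj; rewrite gK /= -fx; apply/eqP; rewrite -hc.
exact: connect_root.
Qed.


Lemma ext_inv N i c : 0 < N -> i < N -> c < 4 ->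
  ext_nat N (ext_nat N (i, c)) = (i, c).
Proof.
case: N => // N _ hi.
case: c => [|[|[|[|c]]]] // _ /=.
- case: i hi => [|i] hi //=. rewrite ifN //; apply/eqP; lia.
- case: eqP => [->|ne] /=; first by rewrite eqxx.
  by [].
- case: i hi => [|i] hi //=. rewrite ifN //; apply/eqP; lia.
- case: eqP => [->|ne] /=; first by rewrite eqxx.
  by [].
Qed.

Lemma ext_odd N i c : i < N -> c < 4 ->
  i + odd c = (ext_nat N (i, c)).1 + odd (ext_nat N (i, c)).2.
Proof.
move=> hi.
case: c => [|[|[|[|c]]]] // _ /=.
- by case: i hi => [|i] hi //=; rewrite addn1 addn0.
- by case: eqP => [->|ne] /=; rewrite ?addn1 ?addn0.
- by case: i hi => [|i] hi //=; rewrite addn1 addn0.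
- by case: eqP => [->|ne] /=; rewrite ?addn1 ?addn0.
Qed.

Lemma split_inv b c : c < 4 -> split_nat b (split_nat b c) = c.
Proof. by case: b; case: c => [|[|[|[|c]]]]. Qed.

Lemma split_odd c : c < 4 -> odd (split_nat false c) = odd c.
Proof. by case: c => [|[|[|[|c]]]]. Qed.


Section Twist.
Variable n : nat.
Variable s : 'I_n.+1 -> bool.
Local Notation N := n.+1.

Definition sn (i : nat) : bool := if @insub _ (fun k => k < N) _ i is Some j then s j else true.
Definition Zc k := count (fun i => ~~ sn i) (iota 0 k).

Lemma snE (i : 'I_N) : sn i = s i.
Proof. by rewrite /sn valK. Qed.

Lemma ZcS k : Zc k.+1 = Zc k + ~~ sn k.
Proof. by rewrite /Zc -addn1 iotaD count_cat /= addn0. Qed.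

Lemma Zc_mono a b : a <= b -> Zc a <= Zc b.
Proof. by move=> /subnKC <-; rewrite /Zc iotaD count_cat leq_addr. Qed.

Definition pt (i c : nat) : port N := (inord i, inord c).

Lemma state_pt i c j d : i < N -> c < 4 -> j < N -> d < 4 ->
  state_rel s (pt i c) (pt j d) =
  (ext_nat N (i, c) == (j, d)) || ((i == j) && (split_nat (s (inord i)) c == d)).
Proof.
move=> hi hc hj hd.
rewrite /state_rel /ext_rel /split_rel /pt /= !inordK //.
congr (_ || (_ && _)).
apply/eqP/eqP => [/(congr1 (@nat_of_ord _))|->//]; rewrite !inordK //.
Qed.

Lemma state_sym : symmetric (state_rel s).
Proof.
move=> x y; rewrite /state_rel; congr orb.
  rewrite /ext_rel; apply/eqP/eqP => <-; rewrite ext_inv //.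
  all: try exact: ltn_ord.
rewrite /split_rel [y.1 == _]eq_sym; apply/andP/andP => -[/eqP e1 /eqP e2]; (split; first by rewrite e1).
  by rewrite -e1 -e2 split_inv // ltn_ord.
by rewrite e1 -e2 split_inv // ltn_ord.
Qed.

Definition fl (x : port N) := Zc (x.1 + odd x.2).

Lemma fl_edge x y : state_rel s x y -> fl x = fl y.
Proof.
case/orP.
  rewrite /ext_rel => /eqP E.
  have := @ext_odd N _ _ (ltn_ord x.1) (ltn_ord x.2).
  rewrite /fl. move: E => /= -> /= ->. by [].
move: x y => [i [c hc]] [j [d hd]]; rewrite /split_rel /= => /andP[/eqP e1 /eqP e2].
subst j; rewrite /fl /= -e2.
case hs: (s i).
  have hz : Zc i = Zc i.+1 by rewrite ZcS snE hs addn0.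
  move: hc; case: c {e2} => [|[|[|[|c]]]] //= _;
  by rewrite ?addn0 ?addn1.
by rewrite split_odd.
Qed.


Local Notation cn := (connect (state_rel s)).
Lemma csym : connect_sym (state_rel s).
Proof. exact: sym_connect_sym state_sym. Qed.

Lemma c1r x y : state_rel s x y -> cn y x.
Proof. by move=> h; rewrite csym; apply: connect1. Qed.

Lemma e_left0 : state_rel s (pt 0 0) (pt 0 2).
Proof. by rewrite state_pt. Qed.

Lemma e_top i : i.+1 < N -> state_rel s (pt i.+1 0) (pt i 1).
Proof. by move=> hi; rewrite state_pt //= ?eqxx //; apply: ltnW. Qed.

Lemma e_bot i : i.+1 < N -> state_rel s (pt i.+1 2) (pt i 3).
Proof. by move=> hi; rewrite state_pt //= ?eqxx //; apply: ltnW. Qed.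

Lemma e_right : state_rel s (pt n 1) (pt n 3).
Proof. by rewrite state_pt // /= !eqxx. Qed.

Lemma e_A i : i < N -> s (inord i) = false ->
  state_rel s (pt i 1) (pt i 3) /\ state_rel s (pt i 0) (pt i 2).
Proof. by move=> hi hs; rewrite !state_pt // hs eqxx !orbT. Qed.

Lemma e_B i : i < N -> s (inord i) = true ->
  state_rel s (pt i 0) (pt i 1) /\ state_rel s (pt i 2) (pt i 3).
Proof. by move=> hi hs; rewrite !state_pt // hs eqxx !orbT. Qed.

Lemma conQ i : i < N -> cn (pt i 0) (pt i 2).
Proof.
elim: i => [|i IH] hi; first exact: connect1 e_left0.
have hi' : i < N by apply: ltnW.
apply: connect_trans (connect1 (e_top hi)) _.
rewrite csym; apply: connect_trans (connect1 (e_bot hi)) _.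
case hs: (s (inord i)).
  have [h01 h23] := e_B hi' hs.
  apply: connect_trans (c1r h23) _.
  rewrite csym in IH; apply: connect_trans (IH hi') _.
  exact: connect1.
by have [h13 _] := e_A hi' hs; apply: c1r.
Qed.

Lemma conR k i : i + k = n -> cn (pt i 1) (pt i 3).
Proof.
elim: k i => [|k IH] i e.
  by rewrite addn0 in e; subst i; apply: connect1 e_right.
have hi : i.+1 < N by lia.
apply: connect_trans (c1r (e_top hi)) _.
rewrite csym; apply: connect_trans (c1r (e_bot hi)) _.
rewrite csym.
case hs: (s (inord i.+1)).
  have [h01 h23] := e_B hi hs.
  apply: connect_trans (connect1 h01) _.
  apply: connect_trans (IH i.+1 _) _; first by lia.
  exact: c1r.
by have [_ h02] := e_A hi hs; apply: connect1.
Qed.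

Lemma to_pt x : cn x (pt x.1 (odd x.2)).
Proof.
have -> : x = pt x.1 x.2 by rewrite /pt !inord_val; case: x.
rewrite /pt !inordK ?ltn_ord //.
move: (ltn_ord x.2) (ltn_ord x.1); case: (nat_of_ord x.2) => [|[|[|[|c]]]] //= _ h1.
- by rewrite csym; apply: conQ.
- by rewrite csym; apply: (@conR (n - x.1)); apply: subnKC.
Qed.


Definition pb b := pt b./2 (odd b).
Definition H b := Zc (uphalf b).

Lemma pb_even i : pb i.*2 = pt i 0.
Proof. by rewrite /pb doubleK odd_double. Qed.
Lemma pb_odd i : pb i.*2.+1 = pt i 1.
Proof. by rewrite /pb /= uphalf_double odd_double. Qed.
Lemma H_even i : H i.*2 = Zc i.
Proof. by rewrite /H uphalf_double. Qed.
Lemma H_odd i : H i.*2.+1 = Zc i.+1.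
Proof. by rewrite /H /= doubleK. Qed.

Lemma H_mono a b : a <= b -> H a <= H b.
Proof. by move=> h; apply: Zc_mono; rewrite !uphalfE; apply: half_leq. Qed.

Lemma H_step c : H c.+1 <= (H c).+1.
Proof.
rewrite -(odd_double_half c); case: (odd c) => /=.
  by rewrite add1n -doubleS H_even H_odd.
by rewrite add0n H_even H_odd ZcS -addn1 leq_add2l leq_b1.
Qed.

Lemma cstep c : c < n.*2.+1 -> H c = H c.+1 -> cn (pb c) (pb c.+1).
Proof.
rewrite -(odd_double_half c); case: (odd c) => /=; set i := c./2 => hc.
  rewrite add1n -doubleS pb_odd pb_even => _.
  apply: c1r; apply: e_top; move: hc; rewrite -!muln2; lia.
rewrite add0n pb_odd pb_even H_even H_odd ZcS -{1}[Zc i]addn0 => /eqP.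
rewrite eqn_add2l eq_sym eqb0 negbK => hs.
have hi : i < N by move: hc; rewrite -!muln2; lia.
rewrite -(inordK hi) snE in hs.
by have [] := e_B hi hs; move=> h _; apply: connect1.
Qed.


Lemma chain d b : b + d <= n.*2.+1 -> H b = H (b + d) -> cn (pb b) (pb (b + d)).
Proof.
elim: d => [|d IH] hb hH; first by rewrite addn0.
have h1 : H b <= H (b + d) by apply: H_mono; apply: leq_addr.
have h2 : H (b + d) <= H (b + d.+1) by apply: H_mono; rewrite addnS.
have e1 : H b = H (b + d).
  by apply/eqP; rewrite eqn_leq h1 /= hH h2.
rewrite addnS in hb hH *.
apply: connect_trans (IH (ltnW hb) e1) (cstep hb _).
by rewrite -e1 hH.
Qed.

Lemma fl_pt i c : i < N -> c < 2 -> fl (pt i c) = Zc (i + odd c).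
Proof. by move=> hi hc; rewrite /fl /pt /= !inordK //; apply: leq_trans hc _. Qed.

Lemma fl_H x : fl x = H (x.1.*2 + odd x.2).
Proof. by rewrite /fl; case: (odd x.2); rewrite ?addn1 ?addn0 ?H_odd ?H_even. Qed.

Lemma pt_pb (x : port N) : pt x.1 (odd x.2) = pb (x.1.*2 + odd x.2).
Proof. by case: (odd x.2); rewrite ?addn1 ?addn0 ?pb_odd ?pb_even. Qed.

Lemma fl_pb b : b <= n.*2.+1 -> fl (pb b) = H b.
Proof.
rewrite -(odd_double_half b); case: (odd b); rewrite ?add1n ?add0n => hb.
  rewrite pb_odd H_odd fl_pt // ?addn1 //.
  by move: hb; rewrite -!muln2; lia.
rewrite pb_even H_even fl_pt // ?addn0 //.
by move: hb; rewrite -!muln2; lia.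
Qed.

Lemma conn_iff x y : cn x y = (fl x == fl y).
Proof.
apply/idP/idP.
  move=> c.
  have cl : closed (state_rel s) [pred z | fl z == fl x].
    by move=> u v /fl_edge; rewrite !inE /= => ->.
  by have := closed_connect cl c; rewrite !inE /= eqxx => /esym /eqP ->.
move=> /eqP e.
wlog hle : x y e / x.1.*2 + odd x.2 <= y.1.*2 + odd y.2.
  move=> W; case: (leqP (x.1.*2 + odd x.2) (y.1.*2 + odd y.2)) => h.
    exact: W.
  by rewrite csym; apply: W; [rewrite e | apply: ltnW].
apply: connect_trans (to_pt x) _; rewrite csym; apply: connect_trans (to_pt y) _; rewrite csym.
rewrite (pt_pb x) (pt_pb y) -(subnKC hle); apply: chain.
  rewrite subnKC //.
  have := ltn_ord y.1; have := leq_b1 (odd y.2); rewrite -!muln2. lia.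
by rewrite subnKC // -!fl_H.
Qed.

Lemma ivt j B : j <= H B -> exists2 b, b <= B & H b = j.
Proof.
elim: B => [|B IH] hj.
  by exists 0 => //; move: hj; rewrite /H /Zc /=; case: j.
case: (leqP j (H B)) => h.
  by case: (IH h) => b hb e; exists b => //; apply: leqW.
exists B.+1 => //; apply/eqP; rewrite eqn_leq hj andbT.
exact: leq_trans (H_step B) h.
Qed.

Lemma ncurvesE : ncurves s = (Zc N).+1.
Proof.
apply: (n_comp_label csym conn_iff).
  move=> x; rewrite /fl; apply: Zc_mono.
  apply: leq_trans (leq_add (ltn_ord x.1 : x.1 <= n) (leq_b1 (odd x.2))) _; by rewrite addn1.
move=> j hj; rewrite -H_odd in hj; case: (ivt hj) => b hb e.
by exists (pb b); rewrite fl_pb.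
Qed.

End Twist.


Lemma count_negb0 (t : seq bool) : count negb t = 0 -> t = nseq (size t) true.
Proof. by elim: t => [|[] t IH] //= h; congr cons; apply: IH. Qed.

Lemma word_lemma N (w : N.-tuple bool) :
  (count negb w == 1) = [exists k : 'I_N, tval w == nseq k true ++ false :: nseq (N - k.+1) true].
Proof.
apply/eqP/existsP => [h|[k /eqP ->]]; last first.
  by rewrite count_cat /= !count_nseq /= !mul0n.
have hin : false \in tval w.
  have : has negb w by rewrite has_count h.
  by case/hasP => -[] // .
have hk : index false w < N by rewrite -{2}(size_tuple w) index_mem.
exists (Ordinal hk) => /=.
set k := index false w.
have E : tval w = take k w ++ false :: drop k.+1 w.
  by rewrite -[in LHS](cat_take_drop k w) (drop_nth false) ?index_mem // nth_index.
move: h; rewrite E count_cat /= => h.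
have h1 : count negb (take k w) = 0 by lia.
have h2 : count negb (drop k.+1 w) = 0 by lia.
rewrite {1}(count_negb0 h1) {1}(count_negb0 h2) size_drop size_tuple size_takel //.
by rewrite size_tuple ltnW.
Qed.

Lemma Zc_count n (s : 'I_n.+1 -> bool) : Zc s n.+1 = count (fun p => ~~ s p) (enum 'I_n.+1).
Proof.
rewrite /Zc -val_enum_ord count_map; apply: eq_count => i /=.
by rewrite snE.
Qed.

Theorem proposition21 (n : nat) (hn : 2 <= n) (num : {perm 'I_n}) :
  [set w : n.-tuple bool | ncurves (fun p : 'I_n => tnth w (num p)) == 2]
  = twist_T n.
Proof.
case: n hn num => [//|n] _ num.
apply/setP => w; rewrite !inE ncurvesE eqSS Zc_count -word_lemma.
have P : perm_eq (map num (enum 'I_n.+1)) (enum 'I_n.+1).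
  apply: uniq_perm; first by rewrite map_inj_uniq ?enum_uniq //; apply: perm_inj.
    exact: enum_uniq.
  move=> i; rewrite mem_enum inE; apply/mapP; exists (num^-1 i)%g; first by rewrite mem_enum.
  by rewrite permKV.
have -> : count (fun p => ~~ tnth w (num p)) (enum 'I_n.+1)
   = count (fun p => ~~ tnth w p) (map num (enum 'I_n.+1)).
  by rewrite [RHS]count_map.
rewrite (seq.permP P).
congr (_ == 1).
by rewrite -[in RHS](map_tnth_enum w) [in RHS]count_map.
Qed.
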